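(* Let $q$ be a power of an odd prime, write $q-1=2^s r$ with $r$ odd, let $c\in\mathbb{F}_q^*$, and $f(X)=c(X^{q+1}-X^2)$ on $\mathbb{F}_{q^2}$. Let $P$ be any periodic point of $f$ not lying in the connected component of $0$ in the functional graph of $f$. Then the subgraph consisting of $P$ together with all non-periodic $v\in\mathbb{F}_{q^2}$ such that $P$ is the first periodic element of the sequence $v,f(v),f^{(2)}(v),\dots$ (with the edges $x\to f(x)$ among these vertices) is a tree isomorphic to $\mathscr{T}(s)$ with root $P$.
   Context: The functional graph of $f$ is the directed graph on $\mathbb{F}_{q^2}$ with edges $x\to f(x)$; $\alpha$ is periodic if $f^{(n)}(\alpha)=\alpha$ for some $n\ge1$. $\mathscr{T}(1)$ is the tree with two vertices $P_1,P$ and the edge $P_1\to P$ (root $P$); for $m\ge1$, $\mathscr{T}(m+1)$ is obtained from $\mathscr{T}(m)$ by attaching two new vertices, each with an edge directed to it, to every vertex of the last (top) level of $\mathscr{T}(m)$. *)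

(* Defs.v *)
From mathcomp Require Import all_boot all_order all_algebra all_field.
Set Implicit Arguments. Unset Strict Implicit. Unset Printing Implicit Defensive.
Import GRing.Theory.
Local Open Scope ring_scope.

Definition fmap (F : fieldType) (q : nat) (c x : F) : F := c * (x ^+ q.+1 - x ^+ 2).

Definition periodic (T : Type) (f : T -> T) (a : T) : Prop :=
  exists n : nat, (0 < n)%N /\ iter n f a = a.

(* x and y lie in the same connected component of the functional graph
   (undirected connectivity; for a functional graph this is: their forward
   orbits meet). *)
Definition same_component (T : Type) (f : T -> T) (x y : T) : Prop :=
  exists m n : nat, iter m f x = iter n f y.

Definition first_periodic (T : Type) (f : T -> T) (v P : T) : Prop :=
  exists k : nat, iter k f v = P /\ periodic f P /\
    (forall j : nat, (j < k)%N -> ~ periodic f (iter j f v)).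

Definition tree_at (T : Type) (f : T -> T) (P v : T) : Prop :=
  v = P \/ (~ periodic f v /\ first_periodic f v P).

(* The tree T(m): vertices are None (the root P) and Some w with w a bit
   string of length < m; Some w sits at level (size w).+1.  Level 1 is the
   single vertex P_1 = Some [::]; each vertex Some w at level < m has the two
   children Some (true :: w), Some (false :: w). *)
Definition Tvert (m : nat) (t : option (seq bool)) : bool :=
  match t with None => true | Some w => (size w < m)%N end.

Definition Tedge (u v : option (seq bool)) : bool :=
  match u with
  | None => false
  | Some [::] => v == None
  | Some (_ :: w) => v == Some w
  end.

(* Main.v *)
Require Import Defs.
From mathcomp Require Import all_boot all_order all_algebra all_field.
From mathcomp Require Import all_solvable ring zify.
From Stdlib Require Import ClassicalEpsilon.
Import GRing.Theory.
Local Open Scope ring_scope.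

Lemma L_fq {F : fieldType} (q : nat) (c : F)
  (hfrob : forall x y : F, (x + y)^+q = x^+q + y^+q)
  (hneg : forall x : F, (-x)^+q = - x^+q)
  (hqq : forall x : F, (x^+q)^+q = x) (hcq : c^+q = c) (x : F) :
  fmap q c x ^+ q * x = - (x ^+ q) * fmap q c x.
Proof.
rewrite /fmap exprMn hcq hfrob hneg exprS exprMn hqq -!exprM mulnC exprM.
ring.
Qed.

Lemma L_fiber {F : fieldType} (q : nat) (c : F)
  (hfrob : forall x y : F, (x + y)^+q = x^+q + y^+q)
  (hneg : forall x : F, (-x)^+q = - x^+q)
  (hqq : forall x : F, (x^+q)^+q = x) (hcq : c^+q = c) (a b lam : F) :
  a != 0 -> b != 0 -> fmap q c b != 0 -> lam ^+ q = lam -> lam != 0 ->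
  fmap q c a = lam * fmap q c b -> (a / b) ^+ q = a / b.
Proof.
move=> a0 b0 fb0 lq l0 e.
have ha := L_fq q c hfrob hneg hqq hcq a.
have hb := L_fq q c hfrob hneg hqq hcq b.
rewrite e exprMn lq in ha.
set fb := fmap q c b in ha hb fb0 *.
have h1 : fb ^+ q * a = - a ^+ q * fb.
  apply: (mulfI l0); rewrite mulrA ha; ring.
have h2 : a ^+ q * b = b ^+ q * a.
  apply: (mulfI fb0).
  have e1 : fb * (a ^+ q * b) = - (fb ^+ q * a) * b by rewrite h1; ring.
  have e2 : fb * (b ^+ q * a) = - (fb ^+ q * b) * a by rewrite hb; ring.
  rewrite e1 e2; ring.
rewrite exprMn exprVn; apply/eqP; rewrite eqr_div ?expf_neq0 //; apply/eqP.
by rewrite h2 mulrC.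
Qed.

Lemma L_homog {F : fieldType} (q : nat) (c x u : F) :
  u ^+ q = u -> fmap q c (x * u) = u ^+ 2 * fmap q c x.
Proof.
move=> uq; rewrite /fmap exprMn [u ^+ q.+1]exprS uq; ring.
Qed.

Lemma L_homog_iter {F : fieldType} (q : nat) (c x u : F) (n : nat) :
  u ^+ q = u -> iter n (fmap q c) (x * u) = iter n (fmap q c) x * u ^+ (2 ^ n).
Proof.
move=> uq; elim: n => [|n IH]; first by rewrite expr1.
rewrite !iterS IH L_homog; last by rewrite exprAC uq.
by rewrite expnS mulnC exprM; ring.
Qed.

Lemma L_neg {F : fieldType} (q : nat) (c x : F) :
  odd q -> fmap q c (- x) = fmap q c x.
Proof.
move=> oq; rewrite /fmap sqrrN exprNn -signr_odd /= oq /= expr0 mul1r //.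
Qed.
Lemma card_nz_le (T : finType) (a : T) : (#|T|.-1 <= size [seq x <- enum T | x != a])%N.
Proof. rewrite -(cardC1 a) cardE /enum_mem; apply: eq_leq; congr size.
rewrite /enum_mem -enumT. elim: (enum T) => //= y l ->. rewrite !inE /=. by case: (y != a). Qed.

Lemma L_euler (F : finFieldType) (q s r k : nat) (hF : #|F| = (q^2)%N)
  (hsr : q.-1 = (2^s*r)%N) (hq1 : (1 < q)%N) (u : F) :
  u^+q = u -> u != 0 -> u^+(2^k) = 1 -> (k < s)%N ->
  exists v : F, v^+q = v /\ v^+2 = u.
Proof.
move=> uq u0 uk ks.
set N := #|F|.-1.
have hN : N = (q.-1 * q.+1)%N by rewrite /N hF; nia.
have N0 : (0 < N)%N by rewrite hN; nia.
have pow1 : forall x : F, x != 0 -> x ^+ N = 1.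
  move=> x x0; apply: (mulIf x0); rewrite mul1r -exprSr /N prednK ?expf_card //.
  by rewrite hF; nia.
pose rs := [seq x <- enum F | x != 0].
have : has N.-primitive_root rs.
  apply: has_prim_root => //.
  - by apply/allP => x; rewrite mem_filter => /andP[x0 _]; rewrite unity_rootE pow1.
  - by rewrite filter_uniq // enum_uniq.
  - rewrite /N; exact: card_nz_le.
case/hasP => g _ gprim.
have [[i ilt] ui] := prim_rootP gprim (pow1 u u0).
rewrite /= in ui.
have uq1 : u ^+ q.-1 = 1.
  apply: (mulIf u0); rewrite mul1r -exprSr prednK //; lia.
have : (N %| i * q.-1)%N by rewrite (prim_order_dvd gprim) exprM -ui uq1.
rewrite hN (mulnC i) dvdn_pmul2l; last by lia.
case/dvdnP => j ij.
have : (N %| i * 2 ^ k)%N by rewrite (prim_order_dvd gprim) exprM -ui uk.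
rewrite hN ij mulnAC dvdn_pmul2r // hsr.
have -> : (2 ^ s = 2 ^ (s - k) * 2 ^ k)%N by rewrite -expnD subnK // ltnW.
move=> h.
have : (2 ^ (s - k) %| j)%N.
  have h2 : (2 ^ (s - k) * 2 ^ k %| j * 2 ^ k)%N.
    by apply: dvdn_trans h; apply: dvdn_mulr.
  by rewrite dvdn_pmul2r ?expn_gt0 in h2.
have : (2 %| 2 ^ (s - k))%N by rewrite dvdn_exp // subn_gt0.
move=> d1 d2; have := dvdn_trans d1 d2; case/dvdnP => l jl.
exists (g ^+ (l * q.+1)); split.
  have e : (g ^+ (l * q.+1)) ^+ q.-1 = 1.
    by rewrite -exprM -mulnA (mulnC q.+1) -hN mulnC exprM (prim_expr_order gprim) expr1n.
  have -> : (g ^+ (l * q.+1)) ^+ q = (g ^+ (l * q.+1)) ^+ q.-1.+1.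
    by rewrite prednK //; lia.
  by rewrite exprSr e mul1r.
by rewrite -exprM ui ij jl; congr (_ ^+ _); lia.
Qed.
Lemma L_odd_root (R : ringType) (w : R) (r m : nat) :
  odd r -> w ^+ r = 1 -> w ^+ (2 ^ m) = 1 -> w = 1.
Proof.
move=> hr wr wm.
have r0 : (0 < r)%N by case: r hr wr.
have cop : coprime r (2 ^ m) by rewrite coprimeXr // coprimen2.
case: (egcdnP (2 ^ m) r0) => km kn e _.
move/eqP: cop => g1; rewrite g1 in e.
have : w ^+ (km * r) = w ^+ (kn * 2 ^ m + 1) by rewrite e.
by rewrite mulnC exprM wr expr1n exprD mulnC exprM wm expr1n mul1r expr1.
Qed.
Definition Lv {T : Type} (f : T -> T) (P : T) (k : nat) (x : T) : Prop :=
  iter k f x = P /\ forall j, (j < k)%N -> ~ periodic f (iter j f x).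

Lemma per_f {T : Type} (f : T -> T) x : periodic f x -> periodic f (f x).
Proof. by case=> n [n0 hn]; exists n; split => //; rewrite -iterSr iterS hn. Qed.

Lemma per_iter {T : Type} (f : T -> T) x j : periodic f x -> periodic f (iter j f x).
Proof. by move=> h; elim: j => //= j IH; apply: per_f. Qed.

Lemma per_mul {T : Type} (f : T -> T) x n m : iter n f x = x -> iter (n * m) f x = x.
Proof.
move=> h; elim: m => [|m IH]; first by rewrite muln0.
by rewrite mulnS iterD IH h.
Qed.

Lemma per_inj {T : Type} (f : T -> T) a b :
  periodic f a -> periodic f b -> f a = f b -> a = b.
Proof.
case=> n [n0 hn] [m [m0 hm]] e.
have hnm : (0 < n * m)%N by rewrite muln_gt0 n0.
rewrite -(per_mul f a n m hn) -(per_mul f b m n hm) (mulnC m n) -(prednK hnm) !iterSr e //.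
Qed.

Lemma per_anc {T : Type} (f : T -> T) P h :
  periodic f P -> exists y, periodic f y /\ iter h f y = P.
Proof.
case=> n [n0 hn]; exists (iter (n * h - h) f P); split.
  by apply: per_iter; exists n.
rewrite -iterD subnKC ?per_mul //; rewrite leq_pmull //.
Qed.

Lemma Lv_uniq {T : Type} (f : T -> T) P k j x :
  periodic f P -> Lv f P k x -> Lv f P j x -> k = j.
Proof.
move=> hP [hk Hk] [hj Hj].
case: (ltngtP k j) => // h.
- by case: (Hj k h); rewrite hk.
- by case: (Hk j h); rewrite hj.
Qed.

Lemma Lv_succ {T : Type} (f : T -> T) P k x :
  Lv f P k.+1 x <-> Lv f P k (f x) /\ ~ periodic f x.
Proof.
split.
- case=> h H; split; last by apply: (H 0%N).
  split; first by rewrite -iterSr.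
  by move=> j hj; rewrite -iterSr; apply: H.
- case=> [[h H] hx]; split; first by rewrite iterSr.
  by case=> [|j] hj //; rewrite iterSr; apply: H.
Qed.

Lemma tree_Lv {T : Type} (f : T -> T) P x :
  tree_at f P x -> x <> P -> exists k, (0 < k)%N /\ Lv f P k x.
Proof.
case=> [->//|[hx [k [hk [hP H]]]]] _.
exists k; split; last by [].
by case: k hk H => [/= e|k] //; rewrite e in hx.
Qed.

Lemma Lv_tree {T : Type} (f : T -> T) P k x :
  periodic f P -> (0 < k)%N -> Lv f P k x -> tree_at f P x.
Proof.
move=> hP k0 [hk H]; right; split; first by apply: (H 0%N).
by exists k.
Qed.

Fixpoint psiF {T : Type} (P1 : T) (ch : bool -> T -> T) (w : seq bool) : T :=
  match w with [::] => P1 | b :: w' => ch b (psiF P1 ch w') end.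

Lemma core (T : finType) (f neg : T -> T) (P : T) (s : nat)
  (hP : periodic f P)
  (hnf : forall x, f (neg x) = f x)
  (hnn2 : forall x, neg (neg x) = x)
  (hnn : forall x, same_component f P x -> neg x <> x)
  (hpm : forall x y, same_component f P x -> same_component f P y ->
           f x = f y -> y = x \/ y = neg x)
  (hA5 : forall k x, Lv f P k x -> (k <= s)%N)
  (hA6 : forall k x, Lv f P k x -> (0 < k)%N -> (k < s)%N -> exists w, f w = x) :
  exists phi : T -> option (seq bool),
    [/\ phi P = None,
        (forall x y, tree_at f P x -> tree_at f P y ->
           phi x = phi y -> x = y),
        (forall t, Tvert s t <-> exists2 x, tree_at f P x & phi x = t) &
        (forall x y, tree_at f P x -> tree_at f P y ->
           ((x != P) && (f x == y)) = Tedge (phi x) (phi y))].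
Proof.
have hP' := hP.
case: hP' => n [n0 hn].
pose C := same_component f P.
have CP : C P by exists 0%N, 0%N.
have Cf : forall x, C x -> C (f x).
  by move=> x [a [b e]]; exists a.+1, b; rewrite iterS e -iterS iterSr.
have Cb : forall x, C (f x) -> C x.
  by move=> x [a [b e]]; exists a, b.+1; rewrite e iterSr.
have CLv : forall k x, Lv f P k x -> C x.
  by move=> k x [e _]; exists 0%N, k; rewrite e.
pose y0 := iter n.-1 f P.
have fy0 : f y0 = P by rewrite /y0 -iterS prednK.
have Py0 : periodic f y0 by apply: per_iter.
have Cy0 : C y0 by apply: Cb; rewrite fy0.
pose P1 := neg y0.
have Lv1 : Lv f P 1 P1.
  split; first by rewrite /= /P1 hnf.
  case=> // _ /= hper; apply: (hnn y0 Cy0).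
  by apply: (@per_inj _ f (neg y0) y0) => //; rewrite hnf.
pose sel (x : T) := (enum_rank x < enum_rank (neg x))%N.
have sel_neg : forall x, neg x <> x -> sel (neg x) = ~~ sel x.
  move=> x hx.
  have neq : (enum_rank x : nat) != enum_rank (neg x).
    apply/negP => /eqP /val_inj e; apply: hx; apply: enum_rank_inj; by rewrite e.
  by rewrite /sel hnn2 ltnNge leq_eqVlt (negbTE neq).
pose pre (y : T) := if [pick w | f w == y] is Some w then w else y.
have pre_spec : forall y, (exists w, f w = y) -> f (pre y) = y.
  move=> y [w hw]; rewrite /pre; case: pickP => [z /eqP //|/(_ w)].
  by rewrite hw eqxx.
pose ch (b : bool) (y : T) := let z := pre y in if sel z == b then z else neg z.
have ch_spec : forall k b y, Lv f P k y -> (0 < k)%N -> (k < s)%N ->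
    [/\ Lv f P k.+1 (ch b y), f (ch b y) = y & sel (ch b y) = b].
  move=> k b y hy k0 ks.
  have fz := pre_spec y (hA6 k y hy k0 ks).
  have Cz : C (pre y) by apply: Cb; rewrite fz; apply: (CLv k).
  have fch : f (ch b y) = y by rewrite /ch; case: ifP => _; rewrite ?hnf.
  split => //.
  - apply/Lv_succ; rewrite fch; split => // hper.
    by case: hy => _ /(_ 0%N k0); apply; rewrite -fch; apply: per_f.
  - rewrite /ch; case: ifP => [/eqP //|].
    rewrite sel_neg; last exact: hnn _ Cz. by clear fch; case: b; case: (sel (pre y)).
pose psi := psiF P1 ch.
have psi_spec : forall w, (size w < s)%N -> Lv f P (size w).+1 (psi w).
  elim=> [|b w IH] //= hs.
  have hs' : (size w < s)%N by apply: ltnW.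
  by case: (ch_spec (size w).+1 b (psi w) (IH hs') isT hs).
have psi_f : forall b w, (size (b :: w) < s)%N -> f (psi (b :: w)) = psi w.
  move=> b w hs /=; have hs' : (size w < s)%N by apply: ltnW.
  by case: (ch_spec (size w).+1 b (psi w) (psi_spec w hs') isT hs).
have psi_sel : forall b w, (size (b :: w) < s)%N -> sel (psi (b :: w)) = b.
  move=> b w hs /=; have hs' : (size w < s)%N by apply: ltnW.
  by case: (ch_spec (size w).+1 b (psi w) (psi_spec w hs') isT hs).
have psi_inj : forall w1 w2, (size w1 < s)%N -> (size w2 < s)%N ->
    psi w1 = psi w2 -> w1 = w2.
  elim=> [|b1 w1 IH] [|b2 w2] //= h1 h2 e.
  - have h2' := psi_spec (b2 :: w2) h2; rewrite -e in h2'.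
    by have := @Lv_uniq _ f P _ _ _ hP (psi_spec [::] h1) h2'.
  - have h2' := psi_spec [::] h2; rewrite -e in h2'.
    by have := @Lv_uniq _ f P _ _ _ hP (psi_spec (b1 :: w1) h1) h2'.
  - have e1 := psi_f b1 w1 h1; have e2 := psi_f b2 w2 h2.
    have s1 := psi_sel b1 w1 h1; have s2 := psi_sel b2 w2 h2.
    rewrite /= in e1 e2 s1 s2.
    rewrite e in e1 s1; rewrite -s1 s2; congr (_ :: _).
    by apply: IH; [apply: ltnW | apply: ltnW | rewrite -e1 e2].
have psi_neqP : forall w, (size w < s)%N -> psi w <> P.
  move=> w hw e; case: (psi_spec w hw) => _ /(_ 0%N isT) /=.
  by rewrite e.
have psi_surj : forall k x, Lv f P k x -> (0 < k)%N ->
    exists w, [/\ (size w < s)%N, psi w = x & size w = k.-1].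
  elim=> [//|k IH] x hx _.
  have ks := hA5 _ _ hx.
  case: k IH hx ks => [|k] IH hx ks.
  - exists [::]; split => //=.
    have fx : f x = P by case: hx.
    case: (hpm y0 x Cy0 (CLv _ _ hx)); first by rewrite fx.
    + by move=> e; case: hx => _ /(_ 0%N isT) /=; rewrite e.
    + by move=> ->.
  - case/Lv_succ: hx => hfx hnx.
    case: (IH (f x) hfx isT) => w [hw pw sw].
    exists (sel x :: w); split => //=; last by rewrite sw.
      by rewrite sw.
    change (ch (sel x) (psi w) = x); rewrite pw /ch.
    have fz := pre_spec (f x) (ex_intro _ x erefl).
    have Cx : C x by apply: (CLv _ _ (proj2 (Lv_succ f P _ x) (conj hfx hnx))).
    have Cz : C (pre (f x)) by apply: Cb; rewrite fz; apply: Cf.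
    set z := pre (f x) in fz Cz *.
    case: (hpm _ _ Cz Cx fz) => e; first by rewrite -e eqxx.
    rewrite e sel_neg; last exact: hnn _ Cz.
    by case: (sel z).
pose phi (x : T) : option (seq bool) :=
  if x == P then None else
  match excluded_middle_informative (exists w, (size w < s)%N /\ psi w = x) with
  | left h => Some (proj1_sig (constructive_indefinite_description _ h))
  | right _ => None end.
have phi_psi : forall w, (size w < s)%N -> phi (psi w) = Some w.
  move=> w hw; rewrite /phi; case: eqP => [/(psi_neqP w hw) //|_].
  case: excluded_middle_informative => [h|[]]; last by exists w.
  case: constructive_indefinite_description => w' [hw' e] /=.
  by rewrite (psi_inj _ _ hw' hw e).
have phi_tree : forall x, tree_at f P x -> x <> P ->
    exists w, [/\ (size w < s)%N, psi w = x & phi x = Some w].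
  move=> x hx xP; case: (@tree_Lv _ f P x hx xP) => k [k0 hk].
  case: (psi_surj k x hk k0) => w [hw pw _].
  by exists w; split => //; rewrite -pw phi_psi.
have phiP : phi P = None by rewrite /phi eqxx.
exists phi; split => //.
- move=> x y hx hy e.
  case: (eqVneq x P) => [xP|xP]; case: (eqVneq y P) => [yP|yP].
  + by rewrite xP yP.
  + case: (phi_tree y hy (elimN eqP yP)) => w [_ _ pw].
    by rewrite xP phiP pw in e.
  + case: (phi_tree x hx (elimN eqP xP)) => w [_ _ pw].
    by rewrite yP phiP pw in e.
  + case: (phi_tree x hx (elimN eqP xP)) => w1 [_ p1 e1].
    case: (phi_tree y hy (elimN eqP yP)) => w2 [_ p2 e2].
    by rewrite -p1 -p2; congr psi; move: e; rewrite e1 e2 => -[].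
- case=> [w|] /=; split.
  + move=> hw; exists (psi w); last by apply: phi_psi.
    by apply: (@Lv_tree _ f P _ _ hP _ (psi_spec w hw)).
  + case=> x hx e.
    case: (eqVneq x P) => [xP|xP]; first by rewrite xP phiP in e.
    case: (phi_tree x hx (elimN eqP xP)) => w' [hw' _ pw].
    by move: e; rewrite pw => -[<-].
  + by move=> _; exists P; [left|].
  + by [].
- move=> x y hx hy.
  case: (eqVneq x P) => [->|xP]; first by rewrite phiP.
  case: (phi_tree x hx (elimN eqP xP)) => w [hw px ->] /=.
  case: w hw px => [|b w] hw px.
  + have fx : f x = P by rewrite -px; case: Lv1.
    rewrite fx; case: (eqVneq y P) => [->|yP]; first by rewrite phiP eqxx.
    case: (phi_tree y hy (elimN eqP yP)) => w' [_ _ ->].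
    by [].
  + have hw' : (size w < s)%N by apply: ltnW.
    rewrite -px psi_f //.
    case: (eqVneq (psi w) y) => [<-|ny]; first by rewrite phi_psi // eqxx.
    apply/esym/negbTE/eqP => e.
    case: (eqVneq y P) => [yP|yP]; first by rewrite yP phiP in e.
    case: (phi_tree y hy (elimN eqP yP)) => w' [_ py e'].
    rewrite e' in e; case: e => ew; move/eqP: ny; apply; by rewrite -py ew.
Qed.

Theorem theorem12 (F : finFieldType) (p k q s r : nat)
  (hp : prime p) (hpodd : odd p) (hk : (0 < k)%N) (hq : q = (p ^ k)%N)
  (hF : #|F| = (q ^ 2)%N)
  (hsr : q.-1 = (2 ^ s * r)%N) (hr : odd r)
  (c : F) (hcq : c ^+ q = c) (hc0 : c != 0)
  (P : F) (hP : periodic (fmap q c) P)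
  (hP0 : ~ same_component (fmap q c) P 0) :
  exists phi : F -> option (seq bool),
    [/\ phi P = None,
        (forall x y, tree_at (fmap q c) P x -> tree_at (fmap q c) P y ->
           phi x = phi y -> x = y),
        (forall t, Tvert s t <-> exists2 x, tree_at (fmap q c) P x & phi x = t) &
        (forall x y, tree_at (fmap q c) P x -> tree_at (fmap q c) P y ->
           ((x != P) && (fmap q c x == y)) = Tedge (phi x) (phi y))].
Proof.
have q1 : (1 < q)%N.
  rewrite hq -(prednK hk) expnS.
  apply: (leq_trans (prime_gt1 hp)); rewrite leq_pmulr // expn_gt0 prime_gt0 //.
have hoddq : odd q by rewrite hq oddX hpodd orbT.
have pc : p \in [pchar F].
  apply: (@card_finPcharP _ _ (k * 2)) => //; by rewrite hF hq expnM.
have qn : [pchar F].-nat q.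
  by rewrite hq pnatX (eq_pnat _ (pcharf_eq pc)) pnat_id.
have hfrob : forall x y : F, (x + y)^+q = x^+q + y^+q.
  by move=> x y; apply: exprDn_pchar.
have hneg : forall x : F, (-x)^+q = - x^+q.
  by move=> x; apply: exprNn_pchar.
have hqq : forall x : F, (x^+q)^+q = x.
  by move=> x; rewrite -exprM mulnn -hF expf_card.
have h2 : (2%:R : F) != 0.
  apply/negP => h2; have : (2 \in [pchar F]) by apply/andP.
  by rewrite (pcharf_eq pc) inE => /eqP p2; rewrite -p2 in hpodd.
pose f := fmap q c.
pose C := same_component f P.
have Cnz : forall x, C x -> x != 0.
  by move=> x hx; apply/eqP => x0; apply: hP0; rewrite -x0.
have Cf : forall x, C x -> C (f x).
  by move=> x [a [b e]]; exists a.+1, b; rewrite iterS e -iterS iterSr.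
have Citer : forall j x, C x -> C (iter j f x).
  by elim=> //= j IH x hx; apply: Cf; apply: IH.
have CP : C P by exists 0%N, 0%N.
have P0 := Cnz P CP.
have fiber : forall m x y lam, C x -> C y -> lam ^+ q = lam -> lam != 0 ->
    iter m f x = lam * iter m f y -> exists u, [/\ u ^+ q = u, u != 0 & x = y * u].
  elim=> [|m IH] x y lam Cx Cy lq l0 e.
    by exists lam; split => //; rewrite /= in e; rewrite e mulrC.
  rewrite !iterS in e.
  have a0 := Cnz _ (Citer m x Cx); have b0 := Cnz _ (Citer m y Cy).
  have fb0 : f (iter m f y) != 0 by rewrite -iterS; apply: Cnz; apply: Citer.
  have hu := L_fiber q c hfrob hneg hqq hcq _ _ _ a0 b0 fb0 lq l0 e.
  apply: (IH x y (iter m f x / iter m f y)) => //.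
    by rewrite mulf_neq0 // invr_eq0.
  by rewrite divfK.
have ufix : forall x y u j, C x -> C y -> u ^+ q = u -> x = y * u ->
    iter j f x = iter j f y -> u ^+ (2 ^ j) = 1.
  move=> x y u j Cx Cy uq e ej.
  have := L_homog_iter q c y u j uq; rewrite -e ej => h.
  have n0 := Cnz _ (Citer j y Cy).
  by apply: (mulfI n0); rewrite -h mulr1.
apply: (@core _ f (fun x => - x) P s hP).
- by move=> x; apply: L_neg.
- by move=> x; rewrite opprK.
- move=> x Cx e; have x0 := Cnz x Cx.
  have : x *+ 2 == 0 by rewrite mulr2n -{1}e addNr.
  by rewrite -mulr_natl mulf_eq0 (negbTE h2) (negbTE x0).
- move=> x y Cx Cy e.
  have x0 := Cnz x Cx; have y0 := Cnz y Cy; have fx0 := Cnz _ (Cf x Cx).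
  have hu := L_fiber q c hfrob hneg hqq hcq _ _ _ y0 x0 fx0 (expr1n _ _) (oner_neq0 _)
    (etrans (esym e) (esym (mul1r _))).
  have ey : y = x * (y / x) by rewrite mulrC divfK.
  have : f y = (y / x) ^+ 2 * f x by rewrite {1}ey /f L_homog.
  rewrite -e -{1}[f x]mul1r => /(mulIf fx0) /eqP.
  rewrite eq_sym sqrf_eq1 => /orP[] /eqP u1; rewrite ey u1.
  + by left; rewrite mulr1.
  + by right; rewrite mulrN1.
- move=> j x hx; rewrite leqNgt; apply/negP => sj.
  have [y [Py hy]] := per_anc f P j hP.
  have Cx : C x by exists 0%N, j; case: hx => ->.
  have Cy : C y by exists 0%N, j; rewrite hy.
  have ej : iter j f x = 1 * iter j f y by rewrite mul1r hy; case: hx.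
  have [u [uq u0 xu]] := fiber j x y 1 Cx Cy (expr1n _ _) (oner_neq0 _) ej.
  have uj := ufix x y u j Cx Cy uq xu (etrans ej (mul1r _)).
  have uq1 : u ^+ (2 ^ s * r) = 1.
    rewrite -hsr; apply: (mulIf u0); rewrite mul1r -exprSr prednK ?uq //; lia.
  have us : u ^+ (2 ^ s) = 1.
    apply: (@L_odd_root F (u ^+ (2 ^ s)) r (j - s) hr).
      by rewrite -exprM.
    by rewrite -exprM -expnD subnKC // ltnW.
  case: hx => _ /(_ s sj); apply.
  rewrite xu L_homog_iter // us mulr1; exact: (per_iter f y s Py).
- move=> j x hx j0 js.
  have [y' [Py' hy']] := per_anc f P j.+1 hP.
  pose y := f y'.
  have hy : iter j f y = P by rewrite /y -iterSr.
  have Cx : C x by exists 0%N, j; case: hx => ->.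
  have Cy : C y by exists 0%N, j; rewrite hy.
  have ej : iter j f x = 1 * iter j f y by rewrite mul1r hy; case: hx.
  have [u [uq u0 xu]] := fiber j x y 1 Cx Cy (expr1n _ _) (oner_neq0 _) ej.
  have uj := ufix x y u j Cx Cy uq xu (etrans ej (mul1r _)).
  have [v [vq v2]] := @L_euler F q s r j hF hsr q1 u uq u0 uj js.
  exists (y' * v); rewrite /f L_homog // v2 xu mulrC //.
Qed.
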